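(* Let $G$ be a non-bipartite $\ell$-regular graph. Assume the edge-connectivity of $G$ is $\ell$, and that the only edge cuts consisting of $\ell$ edges are the sets of $\ell$ edges incident to a single vertex. Then for any vertex cut $S$ of $G$, $|S| > c(G\setminus S)$. In particular, $t(K(n,k))>1$ for any $n\ge 2k+1$.
   Context: A vertex cut of a connected graph $G$ is a set $S$ of vertices whose removal disconnects $G$; $c(G\setminus S)$ denotes the number of connected components after deleting $S$. The toughness is $t(G)=\min_S |S|/c(G\setminus S)$ over all vertex cuts $S$. The Kneser graph $K(n,k)$ has as vertices the $k$-element subsets of $[n]$, two vertices being adjacent iff they are disjoint. *)

(* Defs.v *)
(* Finite simple graphs as symmetric irreflexive relations. *)
From mathcomp Require Import all_boot all_order all_algebra.
Set Implicit Arguments. Unset Strict Implicit. Unset Printing Implicit Defensive.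
Import Order.TTheory GRing.Theory Num.Theory.

Section Graph.
Variables (T : finType) (e : rel T).

Definition nbhd (x : T) : {set T} := [set y | e x y].
Definition regular (l : nat) := forall x, #|nbhd x| = l.

Definition bipartite := exists f : T -> bool, forall x y, e x y -> f x != f y.

(* edges are represented as 2-element vertex sets {x,y} *)
Definition edge_boundary (X : {set T}) : {set {set T}} :=
  [set [set x; y] | x in X, y in ~: X & e x y].
Definition incident_edges (v : T) : {set {set T}} :=
  [set [set v; y] | y in nbhd v].

Definition edge_cut (F : {set {set T}}) :=
  exists X : {set T}, [/\ X != set0, X != setT & F = edge_boundary X].

Definition edge_connectivity_is (l : nat) :=
  (exists F, edge_cut F /\ #|F| = l) /\ (forall F, edge_cut F -> l <= #|F|).

Definition removed_rel (S : {set T}) : rel T :=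
  [rel x y | [&& e x y, x \notin S & y \notin S]].
Definition components (S : {set T}) : {set {set T}} :=
  [set [set y in ~: S | connect (removed_rel S) x y] | x in ~: S].
Definition ncomp (S : {set T}) : nat := #|components S|.

Definition vertex_cut (S : {set T}) := 2 <= ncomp S.

(* t(G) > r, where t(G) = min_S |S| / c(G\S) over vertex cuts S
   (t(G) = +infinity when there is no vertex cut) *)
Definition toughness_gt (r : rat) :=
  forall S, vertex_cut S -> (r < (#|S|%:R / (ncomp S)%:R))%R.

End Graph.

Definition kset (n k : nat) := {A : {set 'I_n} | #|A| == k}.
Definition kneser (n k : nat) : rel (kset n k) :=
  fun A B => [disjoint sval A & sval B].

(* Main.v *)
Require Import Defs.
From mathcomp Require Import all_boot all_order all_algebra perm.
From mathcomp Require Import zify.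
Set Implicit Arguments. Unset Strict Implicit. Unset Printing Implicit Defensive.

Section Gen.
Variables (T : finType) (e : rel T).
Hypothesis syme : symmetric e.
Hypothesis eirr : irreflexive e.

Definition bnd (X : {set T}) : nat :=
  \sum_(p : T * T) [&& e p.1 p.2, p.1 \in X & p.2 \notin X].

Lemma sum_ind (I : finType) (P : pred I) : \sum_(i : I) (P i : nat) = #|P|.
Proof.
rewrite -sum1_card [RHS]big_mkcond /=; apply: eq_bigr => i _; by rewrite unfold_in; case: (P i).
Qed.

Lemma sum_inds (I : finType) (A : {set I}) : \sum_(i : I) ((i \in A) : nat) = #|A|.
Proof.
rewrite -sum1_card [RHS]big_mkcond /=; apply: eq_bigr => i _; by case: (i \in A).
Qed.

Lemma bnd_sub X Y : bnd (X :&: Y) + bnd (X :|: Y) <= bnd X + bnd Y.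
Proof.
rewrite /bnd -!big_split /=; apply: leq_sum => p _; rewrite !inE.
by case: (e _ _); case: (p.1 \in X); case: (p.1 \in Y); case: (p.2 \in X);
  case: (p.2 \in Y).
Qed.

Lemma bndC X : bnd (~: X) = bnd X.
Proof.
have inj : injective (fun p : T * T => (p.2, p.1)) by move=> [a b] [c f] [-> ->].
rewrite /bnd (reindex_inj inj) /=; apply: eq_bigr => p _; rewrite syme !inE negbK.
by case: (e _ _); case: (p.1 \in X); case: (p.2 \in X).
Qed.

Lemma bnd_posi A B : bnd (A :\: B) + bnd (B :\: A) <= bnd A + bnd B.
Proof.
have := bnd_sub A (~: B).
rewrite -(bndC (A :|: ~: B)) setCU setCK (bndC B) !setDE setIC.
by rewrite [~: A :&: B]setIC.
Qed.

Lemma bnd_sum X : bnd X = \sum_(x in X) #|nbhd e x :\: X|.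
Proof.
rewrite /bnd -(pair_bigA _ (fun x y => [&& e x y, x \in X & y \notin X] : nat)) /=.
rewrite [RHS]big_mkcond /=; apply: eq_bigr => x _.
case: (boolP (x \in X)) => xX /=.
  rewrite -sum_inds; apply: eq_bigr => y _.
  by rewrite !inE andbC.
by apply: big1 => y _; rewrite andbF.
Qed.

Lemma bnd0 (X : {set T}) : (forall x y, x \in X -> y \notin X -> e x y -> False) -> bnd X = 0.
Proof.
move=> H; apply: big1 => p _; case: p => x y /=.
case: (boolP (e x y)) => //= exy; case: (boolP (x \in X)) => //= xX.
case: (boolP (y \in X)) => //= yX; case: (H _ _ xX yX exy).
Qed.

Lemma card_cap x A : #|nbhd e x :&: A| = \sum_(y in A) (e x y : nat).
Proof.
rewrite big_mkcond /= -sum_inds; apply: eq_bigr => y _; rewrite !inE.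
by case: (e x y); case: (y \in A).
Qed.

Lemma eq_from_sum (I : finType) (P : pred I) (a b : I -> nat) :
  (forall i, P i -> a i <= b i) -> \sum_(i | P i) b i <= \sum_(i | P i) a i ->
  forall i, P i -> b i = a i.
Proof.
move=> Hab Hs i Pi; move: Hs; rewrite (bigD1 i) //= (bigD1 i Pi) /=.
have : \sum_(j | P j && (j != i)) a j <= \sum_(j | P j && (j != i)) b j.
  by apply: leq_sum => j /andP[Pj _]; apply: Hab.
have := Hab i Pi; lia.
Qed.



Lemma bnd_pos (X : {set T}) : 0 < bnd X -> exists x y, [/\ x \in X, y \notin X & e x y].
Proof.
case: (boolP [exists x, exists y, [&& x \in X, y \notin X & e x y]]).
  by move=> /existsP[x /existsP[y /and3P[? ? ?]]] _; exists x, y.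
move=> /negP H; rewrite bnd0 // => x y xX yX exy; apply: H.
by apply/existsP; exists x; apply/existsP; exists y; rewrite xX yX exy.
Qed.

Lemma rsym S : symmetric (removed_rel e S).
Proof. by move=> x y; rewrite /removed_rel /= syme; case: (e y x); case: (x \in S); case: (y \in S). Qed.

Lemma comp_part S : partition (components e S) (~: S).
Proof.
apply: equivalence_partitionP => x y z _ _ _; split; first exact: connect0.
move=> Hxy; apply/idP/idP => H.
  by apply: connect_trans H; rewrite (sym_connect_sym (rsym S)).
exact: connect_trans Hxy H.
Qed.

Variable d : nat.
Hypothesis reg : regular e d.

Lemma core S : ~ bipartite e -> 0 < d ->
  (forall X : {set T}, X != set0 -> X != setT -> d <= bnd X) ->
  (forall X : {set T}, 2 <= #|X| -> 2 <= #|~: X| -> bnd X = d -> False) ->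
  vertex_cut e S -> ncomp e S < #|S|.
Proof.
move=> nbip d0 lam sup vc.
set P := components e S.
have part : partition P (~: S) := comp_part S.
have out : forall C x y, C \in P -> x \in C -> y \notin C -> e x y -> y \in S.
  move=> C x y /imsetP[z zS ->]; rewrite !inE => /andP[xS zx] yC exy.
  apply: contraR yC => yS; rewrite yS /=.
  apply: connect_trans zx (connect1 _); by rewrite /removed_rel /= exy xS yS.
have sumC : forall C, C \in P -> bnd C <= \sum_(x in C) #|nbhd e x :&: S|.
  move=> C CP; rewrite bnd_sum; apply: leq_sum => x xC; apply: subset_leq_card.
  apply/subsetP => y; rewrite !inE => /andP[yC exy]; by rewrite exy (out C x y).
have part_sum : \sum_(C in P) \sum_(x in C) #|nbhd e x :&: S|
     = \sum_(x in ~: S) #|nbhd e x :&: S|.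
  by rewrite (set_partition_big _ part).
have dbl : \sum_(x in ~: S) #|nbhd e x :&: S| = \sum_(s in S) #|nbhd e s :\: S|.
  rewrite (eq_bigr (fun x => \sum_(s in S) (e x s : nat))); last by move=> x _; rewrite card_cap.
  rewrite exchange_big /=; apply: eq_bigr => s _; rewrite setDE card_cap.
  by apply: eq_bigr => x _; rewrite syme.
have sumS : \sum_(s in S) #|nbhd e s :\: S| <= \sum_(s in S) d.
  apply: leq_sum => s _; rewrite -(reg s); apply: subset_leq_card; apply: subsetDl.
have sumCs : \sum_(C in P) bnd C <= \sum_(C in P) \sum_(x in C) #|nbhd e x :&: S|.
  by apply: leq_sum.
rewrite ltnNge; apply/negP => cS.
have H1 : \sum_(C in P) bnd C <= \sum_(C in P) d.
  apply: leq_trans sumCs _; rewrite part_sum dbl; apply: leq_trans sumS _.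
  by rewrite !sum_nat_const; apply: leq_mul cS (leqnn d).
have other : forall C, C \in P -> exists z, z \notin S /\ z \notin C.
  move=> C CP; have /card_gt1P [A [B [AP BP AB]]] := vc.
  have [D [DP DC]] : exists D, D \in P /\ D != C.
    by case: (eqVneq A C) => [EAC|NAC]; [exists B; rewrite -EAC eq_sym | exists A].
  have /set0Pn [z zD] := partition_neq0 part DP.
  have dis := (trivIsetP (partition_trivIset part)) D C DP CP DC.
  exists z; split; last by rewrite (disjointFr dis zD).
  by have := subsetP (partitionS part DP) z zD; rewrite inE.
have Cprop : forall C, C \in P -> C != set0 /\ C != setT.
  move=> C CP; split; first exact: (partition_neq0 part CP).
  have [z [_ zC]] := other C CP; apply/negP => /eqP CT; by rewrite CT inE in zC.
have bndCe : forall C, C \in P -> bnd C = d.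
  apply: (eq_from_sum (P := fun C => C \in P) (a := fun _ => d)) => // C CP.
  by have [? ?] := Cprop C CP; apply: lam.
have singl : forall C, C \in P -> #|C| = 1.
  move=> C CP; have [C0 CT] := Cprop C CP.
  have := bndCe C CP => bC.
  have [x [y [xC yC exy]]] : exists x y, [/\ x \in C, y \notin C & e x y].
    by apply: bnd_pos; rewrite bC.
  have yS := out C x y CP xC yC exy.
  have [z [zS zC]] := other C CP.
  have c2 : 2 <= #|~: C|.
    apply/card_gt1P; exists y, z; rewrite !inE yC zC; split => //.
    by apply: contraNneq zS => <-.
  have : 0 < #|C| by rewrite card_gt0.
  case: (ltngtP #|C| 1) => // C2 _; case: (sup C C2 c2 bC).
have Sind : forall s, s \in S -> forall y, y \in S -> ~~ e s y.
  have E := eq_from_sum (P := fun s => s \in S) (a := fun s => #|nbhd e s :\: S|) (b := fun _ => d).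
  have Hs : forall s, s \in S -> #|nbhd e s :\: S| <= d.
    by move=> s' _; rewrite -(reg s'); apply: subset_leq_card; apply: subsetDl.
  have Hsum : \sum_(i in S) d <= \sum_(i in S) #|nbhd e i :\: S|.
    rewrite -dbl -part_sum; apply: leq_trans _ sumCs.
    have : \sum_(C in P) d <= \sum_(C in P) bnd C.
      by apply: leq_sum => C CP; have [? ?] := Cprop C CP; apply: lam.
    apply: leq_trans.
    by rewrite !sum_nat_const; apply: leq_mul cS (leqnn d).
  move=> s sS y yS; have := E Hs Hsum s sS.
  move=> Ed; have := cardsID S (nbhd e s); rewrite -Ed (reg s) -{2}[d]add0n => /eqP.
  rewrite eqn_add2r cards_eq0 => /eqP I0; apply/negP => esy.
  have : y \in nbhd e s :&: S by rewrite !inE esy yS.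
  by rewrite I0 inE.
apply: nbip; exists (fun x => x \in S) => x y exy.
case: (boolP (x \in S)) => xS; case: (boolP (y \in S)) => yS //=.
  by have := Sind x xS y yS; rewrite exy.
set C := [set z in ~: S | connect (removed_rel e S) x z].
have CP : C \in P by apply: imset_f; rewrite inE.
have xC : x \in C by rewrite !inE xS connect0.
have yC : y \in C by rewrite !inE yS /=; apply: connect1; rewrite /removed_rel /= exy xS yS.
have /eqP/cards1P [w Cw] := singl C CP.
move: xC yC; rewrite Cw !inE => /eqP xw /eqP yw; by rewrite xw yw eirr in exy.
Qed.

End Gen.

Lemma eb_mem (T : finType) (e : rel T) (X : {set T}) F :
  reflect (exists x y, [/\ x \in X, y \notin X, e x y & F = [set x; y]])
          (F \in edge_boundary e X).
Proof.
apply: (iffP imset2P).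
  by move=> [x y xX]; rewrite !inE => /andP[yX exy] ->; exists x, y.
by move=> [x [y [xX yX exy ->]]]; apply: (Imset2spec xX) => //; rewrite !inE yX.
Qed.

Lemma card_eb (T : finType) (e : rel T) (X : {set T}) :
  #|edge_boundary e X| = bnd e X.
Proof.
set Ps := [set p : T * T | [&& e p.1 p.2, p.1 \in X & p.2 \notin X]].
have -> : bnd e X = #|Ps|.
  by rewrite /bnd -sum_inds; apply: eq_bigr => p _; rewrite inE.
have -> : edge_boundary e X = (fun p : T * T => [set p.1; p.2]) @: Ps.
  apply/setP => F; apply/eb_mem/imsetP.
    by move=> [x [y [xX yX exy ->]]]; exists (x, y); rewrite // inE /= xX yX exy.
  by move=> [[x y]]; rewrite inE /= => /and3P[exy xX yX] ->; exists x, y.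
apply: card_in_imset => [[a b] [c f]]; rewrite !inE /= => /and3P[_ aX bX] /and3P[_ cX fX] E.
have : a \in [set c; f] by rewrite -E !inE eqxx.
have : b \in [set c; f] by rewrite -E !inE eqxx orbT.
rewrite !inE => /orP[/eqP bc|/eqP bf] /orP[/eqP ac|/eqP af].
- by move: bX; rewrite bc cX.
- by move: bX; rewrite bc cX.
- by rewrite ac bf.
- by move: aX; rewrite af (negbTE fX).
Qed.

Lemma part1 (T : finType) (e : rel T) (l : nat) :
     symmetric e -> irreflexive e ->
     regular e l -> ~ bipartite e ->
     edge_connectivity_is e l ->
     (forall F, edge_cut e F -> #|F| = l -> exists v, F = incident_edges e v) ->
     forall S : {set T}, vertex_cut e S -> ncomp e S < #|S|.
Proof.
move=> sy ir rg nb [_ lam] triv S.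
have l0 : 0 < l.
  case: (posnP l) => // l0; case: nb; exists (fun _ => true) => x y exy.
  have : 0 < #|nbhd e x| by apply/card_gt0P; exists y; rewrite inE.
  by rewrite rg l0.
have lam' : forall X : {set T}, X != set0 -> X != setT -> l <= bnd e X.
  by move=> X X0 XT; rewrite -card_eb; apply: lam; exists X.
apply: (core sy ir rg) => // X X2 CX2 bXd.
have X0 : X != set0 by rewrite -card_gt0; lia.
have XT : X != setT.
  by apply/negP => /eqP XT; move: CX2; rewrite XT setCT cards0.
have [v Ev] := triv _ (ex_intro _ X (And3 X0 XT erefl)) ltac:(by rewrite card_eb bXd).
have F1 : forall x y, x \in X -> y \notin X -> e x y -> x = v \/ y = v.
  move=> x y xX yX exy.
  have : [set x; y] \in edge_boundary e X by apply/eb_mem; exists x, y.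
  rewrite Ev => /imsetP[w _ E].
  have : v \in [set x; y] by rewrite E !inE eqxx.
  by rewrite !inE => /orP[/eqP ->|/eqP ->]; [left|right].
have F2 : forall w, e v w -> (v \in X /\ w \notin X) \/ (v \notin X /\ w \in X).
  move=> w evw.
  have : [set v; w] \in edge_boundary e X by rewrite Ev; apply: imset_f; rewrite inE.
  move=> /eb_mem[x [y [xX yX exy E]]].
  have vw : v != w by apply: contraTneq evw => ->; rewrite ir.
  have : v \in [set x; y] by rewrite -E !inE eqxx.
  have : w \in [set x; y] by rewrite -E !inE eqxx orbT.
  rewrite !inE => /orP[/eqP wx|/eqP wy] /orP[/eqP vx|/eqP vy].
  - by move: vw; rewrite vx wx eqxx.
  - by right; rewrite vy wx.
  - by left; rewrite vx wy.
  - by move: vw; rewrite vy wy eqxx.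
have [a [b [aX bX ab]]] := card_gt1P X2.
have [a' [b' [aX' bX' ab']]] := card_gt1P CX2.
case: (boolP (v \in X)) => vX.
  set Y := X :\ v.
  have Y0 : bnd e Y = 0.
    apply: bnd0 => x y; rewrite !inE => /andP[xv xX] yY exy.
    case: (eqVneq y v) => [yv|yv].
      have := F2 x; rewrite sy -yv => /(_ exy); rewrite xX yv vX; by case=> [][].
    move: yY; rewrite yv /= => yX.
    by case: (F1 x y xX yX exy) => E; [move: xv; rewrite E eqxx | move: yv; rewrite E eqxx].
  have : l <= bnd e Y.
    apply: lam'.
      apply/set0Pn; case: (eqVneq a v) => [av|av].
        by exists b; rewrite !inE bX andbT -av eq_sym ab.
      by exists a; rewrite !inE av aX.
    apply/negP => /eqP YT.
    have : a' \in Y by rewrite YT inE.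
    by rewrite !inE; move: aX'; rewrite inE => /negbTE ->; rewrite andbF.
  by rewrite Y0; lia.
set Y := v |: X.
have Y0 : bnd e Y = 0.
  apply: bnd0 => x y; rewrite !inE => /orP[/eqP xv|xX]; rewrite negb_or => /andP[yv yX] exy.
    by move: exy; rewrite xv => /F2; rewrite (negbTE vX) /=; case=> [][] // _; rewrite (negbTE yX).
  by case: (F1 x y xX yX exy) => E; [move: vX; rewrite -E xX | move: yv; rewrite E eqxx].
have : l <= bnd e Y.
  apply: lam'; first by apply/set0Pn; exists v; rewrite !inE eqxx.
  apply/negP => /eqP YT.
  have : a' \in Y by rewrite YT inE.
  have : b' \in Y by rewrite YT inE.
  rewrite !inE; move: aX' bX'; rewrite !inE => /negbTE -> /negbTE -> /=; rewrite !orbF.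
  by move=> /eqP b'v /eqP a'v; move: ab'; rewrite a'v b'v eqxx.
by rewrite Y0; lia.
Qed.

Definition auto (T : finType) (e : rel T) (s : T -> T) :=
  injective s /\ forall x y, e (s x) (s y) = e x y.

Ltac clean := repeat match goal with
  | H : ?P |- _ => lazymatch type of P with Prop =>
      lazymatch P with
      | is_true (_ <= _) => fail
      | @eq nat _ _ => fail
      | _ => clear H
      end end
  end.
Ltac slia := clean; lia.

Lemma arith2 (m d r : nat) : 1 < m -> r < m -> r < d -> d = m * (d - r) -> m = d /\ r = m.-1.
Proof.
move=> m1 rm rd.
have [t ->] : exists t, d = r + t.+1 by exists (d - r).-1; lia.
rewrite (_ : r + t.+1 - r = t.+1); last lia.
case: t => [|t] H; first lia.
exfalso; have : m * t.+1 >= 2 * t.+1 by rewrite leq_mul2r; lia.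
move: H; rewrite mulnS; lia.
Qed.
Lemma arith1 (m d r : nat) : r < m -> r < d -> d <= m * (d - r).
Proof.
move=> rm rd.
have [t ->] : exists t, d = r + t.+1 by exists (d - r).-1; lia.
rewrite (_ : r + t.+1 - r = t.+1); last lia.
have : t <= m * t by rewrite leq_pmull //; lia.
rewrite mulnS; lia.
Qed.

Section VT.
Variables (T : finType) (e : rel T).
Hypothesis syme : symmetric e.
Hypothesis eirr : irreflexive e.
Variable d : nat.
Hypothesis reg : regular e d.
Hypothesis VT : forall x y, exists s, auto e s /\ s x = y.
Hypothesis conn : forall X : {set T}, X != set0 -> X != setT -> 0 < bnd e X.

Lemma bnd_auto s (X : {set T}) : auto e s -> bnd e (s @: X) = bnd e X.
Proof.
move=> [si se].
have inj : injective (fun p : T * T => (s p.1, s p.2)).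
  by move=> [a b] [c f] [/si -> /si ->].
rewrite /bnd (reindex_inj inj) /=; apply: eq_bigr => p _.
by rewrite se !mem_imset.
Qed.

Lemma nb_small x (A : {set T}) : #|nbhd e x :&: A| <= #|A :\ x|.
Proof.
apply: subset_leq_card; apply/subsetP => y; rewrite !inE => /andP[exy ->].
by rewrite andbT; apply: contraTneq exy => ->; rewrite eirr.
Qed.

Lemma nb_small' x (A : {set T}) : x \in A -> #|nbhd e x :&: A| <= #|A|.-1.
Proof. by move=> xA; have := nb_small x A; rewrite (cardsD1 x A) xA. Qed.

Lemma bnd_each (A : {set T}) x : #|nbhd e x :\: A| = d - #|nbhd e x :&: A|.
Proof. by have := cardsID A (nbhd e x); rewrite reg; slia. Qed.

Lemma lowb (Y : {set T}) : #|Y| * (d - #|Y|.-1) <= bnd e Y.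
Proof.
rewrite bnd_sum -sum_nat_const; apply: leq_sum => x xY.
by rewrite bnd_each; have := nb_small' xY; slia.
Qed.

Lemma stab (A : {set T}) : A != set0 ->
  (forall s, auto e s -> s @: A :&: A != set0 -> s @: A = A) ->
  exists r, [/\ r < #|A|, forall x, x \in A -> #|nbhd e x :&: A| = r
             & bnd e A = #|A| * (d - r)].
Proof.
move=> /set0Pn[x0 x0A] H.
have le : forall x y, x \in A -> y \in A -> #|nbhd e x :&: A| <= #|nbhd e y :&: A|.
  move=> x y xA yA; case: (VT x y) => s [[si se] sxy].
  have sA : s @: A = A.
    apply: H; first by split.
    by apply/set0Pn; exists y; rewrite inE -{1}sxy imset_f.
  rewrite -(card_imset _ si); apply: subset_leq_card.
  apply/subsetP => w /imsetP[z]; rewrite !inE => /andP[exz zA] wE; rewrite wE.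
  by rewrite -sxy se exz /=; rewrite -[in X in _ \in X]sA imset_f.
have eqr : forall x, x \in A -> #|nbhd e x :&: A| = #|nbhd e x0 :&: A|.
  by move=> x xA; apply/eqP; rewrite eqn_leq !le.
exists #|nbhd e x0 :&: A|; split => //.
  have := nb_small' x0A; have : 0 < #|A| by apply/card_gt0P; exists x0.
  slia.
rewrite bnd_sum -sum_nat_const; apply: eq_bigr => x xA.
by rewrite bnd_each eqr.
Qed.

Lemma key_le (N a y ba by' : nat) : a < N -> y < N -> ba * N + a <= by' * N + y ->
  ba <= by' /\ (ba = by' -> a <= y).
Proof. move=> aN yN H; split; [nia | move=> E; subst; slia]. Qed.

Lemma lam_ge (X : {set T}) : X != set0 -> X != setT -> d <= bnd e X.
Proof.
move=> X0 XT.
pose N := #|T|.+1.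
pose Q := fun Y : {set T} => (Y != set0) && (Y != setT).
have QX : Q X by rewrite /Q X0 XT.
have cN : forall Y : {set T}, #|Y| < N by move=> Y; rewrite /N ltnS max_card.
case: (@arg_minnP _ X Q (fun Y => bnd e Y * N + #|Y|) QX) => A /andP[A0 AT] Amin.
have Am : forall Y, Q Y -> bnd e A <= bnd e Y /\ (bnd e A = bnd e Y -> #|A| <= #|Y|).
  by move=> Y QY; apply: key_le (cN A) (cN Y) (Amin Y QY).
suff : d <= bnd e A by move=> H; apply: leq_trans H (Am X QX).1.
have atom : forall s, auto e s -> s @: A :&: A != set0 -> s @: A = A.
  move=> s sa BA; set B := s @: A; apply/eqP; apply: contraT => BnA.
  have cB : #|B| = #|A| by rewrite card_imset //; case: sa.
  have bB : bnd e B = bnd e A by rewrite bnd_auto.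
  have AB0 : A :\: B != set0.
    apply: contraNneq BnA => /eqP; rewrite setD_eq0 => AB.
    by rewrite eq_sym eqEcard AB cB leqnn.
  have BA0 : B :\: A != set0.
    apply: contraNneq BnA => /eqP; rewrite setD_eq0 => AB.
    by rewrite eqEcard AB cB leqnn.
  have /set0Pn[z zBA] := BA.
  have ABT : A :\: B != setT.
    by apply/negP => /eqP E; move: zBA; rewrite inE => /andP[zB _]; have := in_setT z; rewrite -E inE zB.
  have BAT : B :\: A != setT.
    by apply/negP => /eqP E; move: zBA; rewrite inE => /andP[_ zA]; have := in_setT z; rewrite -E inE zA.
  have := bnd_posi syme A B; rewrite bB.
  have [h1 _] := Am _ (ltac:(by rewrite /Q BA0 BAT) : Q (B :\: A)).
  have [h2 h3] := Am _ (ltac:(by rewrite /Q AB0 ABT) : Q (A :\: B)).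
  move=> H; have E : bnd e A = bnd e (A :\: B) by slia.
  have := h3 E; have := cardsID B A; have : 0 < #|A :&: B|.
    by apply/card_gt0P; exists z; move: zBA; rewrite !inE => /andP[-> ->]. 
  slia.
have [r [rA _ bA]] := stab A0 atom.
have := conn A0 AT; rewrite bA => H.
have rd : r < d by move: H; case: (ltnP r d) => // dr; rewrite (eqP (_ : d - r == 0)) ?muln0 //; apply/eqP; slia.
exact: arith1 rA rd.
Qed.


Lemma super : 3 <= d ->
  (forall A : {set T}, #|A| = d ->
     (forall x y, x \in A -> y \in A -> x != y -> e x y) -> False) ->
  forall X : {set T}, 2 <= #|X| -> 2 <= #|~: X| -> bnd e X = d -> False.
Proof.
move=> d3 noc X X2 CX2 bX.
pose Q := fun Y : {set T} => [&& 1 < #|Y|, 1 < #|~: Y| & bnd e Y <= d].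
have QX : Q X by rewrite /Q X2 CX2 bX leqnn.
case: (@arg_minnP _ X Q (fun Y => #|Y|) QX) => A /and3P[A2 CA2 bA] Amin.
have A0 : A != set0 by rewrite -card_gt0; slia.
have AT : A != setT by apply/negP => /eqP E; move: CA2; rewrite E setCT cards0.
have bAe : bnd e A = d by apply/eqP; rewrite eqn_leq bA lam_ge.
have A3 : 2 < #|A|.
  case: (ltngtP #|A| 2) => // E; first slia.
  by have := lowb A; rewrite E bAe; slia.
have cT : #|A| + #|~: A| = #|T| by rewrite cardsC.
have atom : forall s, auto e s -> s @: A :&: A != set0 -> s @: A = A.
  move=> s sa BA; set B := s @: A; apply/eqP; apply: contraT => BnA.
  have cB : #|B| = #|A| by rewrite card_imset //; case: sa.
  have bB : bnd e B = d by rewrite bnd_auto.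
  have AB0 : A :\: B != set0.
    apply: contraNneq BnA => /eqP; rewrite setD_eq0 => AB.
    by rewrite eq_sym eqEcard AB cB leqnn.
  have BA0 : B :\: A != set0.
    apply: contraNneq BnA => /eqP; rewrite setD_eq0 => AB.
    by rewrite eqEcard AB cB leqnn.
  have /set0Pn[z zBA] := BA.
  have BAT : B :\: A != setT.
    by apply/negP => /eqP E; move: zBA; rewrite inE => /andP[_ zA]; have := in_setT z; rewrite -E inE zA.
  have CABge : forall Y : {set T}, Y \subset A -> 1 < #|~: Y|.
    move=> Y YA; apply: leq_trans CA2 _; apply: subset_leq_card.
    by rewrite setCS.
  have cAB := cardsID B A.
  have cBA := cardsID A B.
  have AIB : 0 < #|A :&: B|.
    by apply/card_gt0P; exists z; move: zBA; rewrite !inE => /andP[-> ->].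
  have IC : #|B :&: A| = #|A :&: B| by rewrite setIC.
  case: (ltnP 1 #|A :\: B|) => cD.
    have QD : Q (A :\: B).
      rewrite /Q cD CABge ?subsetDl //=.
      have := bnd_posi syme A B; have := lam_ge BA0 BAT; rewrite bB bAe; slia.
    have := Amin _ QD; slia.
  have QI : Q (A :&: B).
    rewrite /Q CABge ?subsetIl //=; apply/andP; split; first slia.
    have := bnd_sub e A B; rewrite bB bAe.
    have UT : A :|: B != setT.
      apply/negP => /eqP E; have := cardsU A B; rewrite E cardsT; slia.
    have U0 : A :|: B != set0.
      by apply/set0Pn; exists z; move: zBA; rewrite !inE => /andP[-> ->]; rewrite orbT.
    have := lam_ge U0 UT; slia.
  have := Amin _ QI; have : 0 < #|A :\: B| by rewrite card_gt0.
  slia.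
have [r [rA eqr bAr]] := stab A0 atom.
have rd : r < d.
  case: (ltnP r d) => // dr; move: bAr; rewrite bAe.
  rewrite (eqP (_ : d - r == 0)) ?muln0; [lia | apply/eqP; slia].
have [Ad rA1] : #|A| = d /\ r = #|A|.-1.
  by rewrite bAe in bAr; exact: arith2 A2 rA rd bAr.
apply: (noc A Ad) => x y xA yA xy.
have : nbhd e x :&: A = A :\ x.
  apply/eqP; rewrite eqEcard; apply/andP; split.
    apply/subsetP => w; rewrite !inE => /andP[exw ->]; rewrite andbT.
    by apply: contraTneq exw => ->; rewrite eirr.
  by rewrite eqr // rA1; have := cardsD1 x A; rewrite xA; slia.
move/setP => /(_ y); rewrite !inE yA eq_sym xy /= andbT => ->. done.
Qed.

End VT.

Lemma cross_pos (T : finType) (e : rel T) (X : {set T}) x y :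
  x \in X -> y \notin X -> e x y -> 0 < bnd e X.
Proof.
move=> xX yX exy; rewrite /bnd (bigD1 (x, y)) //= xX yX exy /=; lia.
Qed.

Lemma VT_deg (T : finType) (e : rel T) :
  (forall x y, exists s, auto e s /\ s x = y) -> forall x y, #|nbhd e x| <= #|nbhd e y|.
Proof.
move=> VT x y; case: (VT x y) => s [[si se] sxy].
rewrite -(card_imset _ si); apply: subset_leq_card; apply/subsetP => w /imsetP[z].
by rewrite !inE => exz ->; rewrite -sxy se.
Qed.

Lemma ex_ksub (I : finType) (A : {set I}) m : m <= #|A| -> exists B : {set I}, B \subset A /\ #|B| = m.
Proof.
move=> mA; have : 0 < #|[set B : {set I} | (B \subset A) && (#|B| == m)]|.
  by rewrite cards_draws bin_gt0.
by move=> /card_gt0P[B]; rewrite inE => /andP[BA /eqP Bm]; exists B.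
Qed.

Lemma bin_ge m k : 0 < k -> k < m -> m <= 'C(m, k).
Proof.
elim: m k => [|m IH] [|k] // _ km.
case: k km => [|k] km; first by rewrite bin1.
rewrite binS.
case: (ltnP k.+1 m) => km'.
  have := IH k.+1 erefl km'; have : 0 < 'C(m, k.+2) by rewrite bin_gt0.
  slia.
slia.
Qed.

Section Kn.
Variables n k : nat.
Hypothesis nk : 2 * k + 1 <= n.

Local Notation V := (kset n k).
Local Notation e := (@kneser n k).

Lemma kcard (x : V) : #|val x| = k.
Proof. by case: x => A /= /eqP. Qed.

Definition mkV (A : {set 'I_n}) (H : #|A| == k) : V := exist _ A H.

Lemma kn_sym : symmetric e.
Proof. by move=> x y; rewrite /kneser disjoint_sym. Qed.

Lemma kn_irr : 0 < k -> irreflexive e.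
Proof.
move=> k0 x; rewrite /kneser; apply/negP => dis.
have : 0 < #|val x| by rewrite kcard.
by move=> /card_gt0P[i ix]; have := disjointFr dis ix; rewrite ix.
Qed.

Lemma cardD_sym (x y : V) : #|val x :\: val y| = #|val y :\: val x|.
Proof.
have := cardsID (val y) (val x); have := cardsID (val x) (val y).
rewrite !kcard setIC; slia.
Qed.

Lemma common_nb (x y : V) : #|val x :\: val y| = 1 -> exists D, e x D /\ e y D.
Proof.
move=> xy.
have cu : #|val x :|: val y| = k.+1.
  have := cardsU (val x) (val y); have := cardsID (val y) (val x); rewrite !kcard; slia.
have : k <= #|~: (val x :|: val y)|.
  have := cardsC (val x :|: val y); rewrite card_ord cu; slia.
move=> /ex_ksub[B [BC Bk]].
exists (mkV (introT eqP Bk)); rewrite /kneser /=.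
by split; rewrite disjoint_sym disjoints_subset; apply: subset_trans BC _;
  rewrite setCS ?subsetUl ?subsetUr.
Qed.

Lemma kclosure (X : {set V}) x0 : x0 \in X ->
  (forall x y, #|val x :\: val y| = 1 -> x \in X -> y \in X) -> forall y, y \in X.
Proof.
move=> x0X H y.
suff : forall m x, #|val x :\: val y| = m -> x \in X -> y \in X by apply; eauto.
elim=> [|m IH] x xy xX.
  suff -> : y = x by [].
  apply: val_inj; apply/eqP; rewrite eq_sym eqEcard !kcard leqnn andbT.
  by rewrite -setD_eq0 -cards_eq0 xy.
have /card_gt0P[a aD] : 0 < #|val x :\: val y| by rewrite xy.
have /card_gt0P[b bD] : 0 < #|val y :\: val x| by rewrite -cardD_sym xy.
move: (aD) (bD); rewrite !inE => /andP[ay ax] /andP[bx byy].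
set Z := b |: (val x :\ a).
have cZ : #|Z| == k.
  rewrite cardsU1 !inE (negbTE bx) andbF /=.
  apply/eqP; have := cardsD1 a (val x); rewrite ax kcard /=; slia.
set z := mkV cZ.
have xz : #|val x :\: val z| = 1.
  rewrite /= (_ : val x :\: Z = [set a]) ?cards1 //.
  apply/setP => i; rewrite !inE; case: (eqVneq i a) => [->|ia] /=.
    rewrite ax andbT orbF; apply/negP => /eqP ba; move: bx; by rewrite -ba ax.
  by case: (i \in val x); rewrite ?andbF ?andbT ?orbT //=.
apply: (IH z) (H x z xz xX).
rewrite /= (_ : Z :\: val y = (val x :\: val y) :\ a).
  by have := cardsD1 a (val x :\: val y); rewrite aD xy /=; slia.
apply/setP => i; rewrite !inE; case: (eqVneq i b) => [->|ib] /=.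
  by rewrite byy /= andbF.
by case: (i != a); case: (i \in sval y).
Qed.

Definition kmap (p : {perm 'I_n}) (A : V) : V :=
  mkV (introT eqP (etrans (card_imset (val A) (@perm_inj _ p)) (kcard A))).

Lemma kmap_auto p : auto e (kmap p).
Proof.
split.
  move=> A B /(congr1 val) /= E; apply: val_inj; exact: (imset_inj (@perm_inj _ p) E).
by move=> A B; rewrite /kneser /= imset_disjoint //; apply: perm_inj.
Qed.

Lemma kmapM p q A : kmap (p * q)%g A = kmap q (kmap p A).
Proof.
apply: val_inj => /=; rewrite -imset_comp; apply: eq_imset => i /=; by rewrite permM.
Qed.

Lemma kmap1 A : kmap 1%g A = A.
Proof. apply: val_inj => /=; rewrite -[RHS]imset_id; apply: eq_imset => i; by rewrite perm1. Qed.

Lemma kmap_swap (x y : V) : #|val x :\: val y| = 1 -> exists p, kmap p x = y.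
Proof.
move=> xy.
have /card_gt0P[a aD] : 0 < #|val x :\: val y| by rewrite xy.
have /card_gt0P[b bD] : 0 < #|val y :\: val x| by rewrite -cardD_sym xy.
move: (aD) (bD); rewrite !inE => /andP[ay ax] /andP[bx byy].
have D1 : val x :\: val y = [set a].
  by apply/eqP; rewrite eq_sym eqEcard sub1set aD cards1 xy.
exists (tperm a b); apply: val_inj => /=.
apply/eqP; rewrite eqEcard card_imset ?kcard ?leqnn ?andbT; last exact: perm_inj.
apply/subsetP => _ /imsetP[i ix ->].
case: (eqVneq i a) => [->|ia]; first by rewrite tpermL.
have ib : i != b by apply: contraNneq bx => <-.
rewrite tpermD 1?eq_sym //.
apply: contraTT ia => iy; have : i \in val x :\: val y by rewrite inE iy ix.
by rewrite D1 inE negbK.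
Qed.

Lemma kn_VT : forall x y : V, exists s, auto e s /\ s x = y.
Proof.
move=> x; set X := [set y : V | [exists p, kmap p x == y]].
have : forall y, y \in X.
  apply: (kclosure (x0 := x)); first by rewrite inE; apply/existsP; exists 1%g; rewrite kmap1.
  move=> y z yz; rewrite !inE => /existsP[p /eqP pxy]; apply/existsP.
  have [q qyz] := kmap_swap yz; exists (p * q)%g; by rewrite kmapM pxy qyz.
move=> H y; have := H y; rewrite inE => /existsP[p /eqP pxy].
by exists (kmap p); split; [apply: kmap_auto|].
Qed.

Lemma kn_conn (X : {set V}) : X != set0 -> X != setT -> 0 < bnd e X.
Proof.
move=> /set0Pn[x0 x0X] XT; rewrite lt0n; apply/negP => /eqP b0.
case/negP: XT; apply/eqP/setP => y; rewrite inE.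
apply: (kclosure x0X) => x z xz xX.
have [D [exD ezD]] := common_nb xz.
case: (boolP (D \in X)) => DX.
  by apply: contraT => zX; have := @cross_pos _ e X D z DX zX; rewrite b0; apply; move: ezD; rewrite /kneser disjoint_sym.
by have := @cross_pos _ e X x D xX DX exD; rewrite b0.
Qed.

End Kn.

Lemma complete_ncomp (T : finType) (e : rel T) :
  symmetric e -> (forall x y, x != y -> e x y) -> forall S, ncomp e S <= 1.
Proof.
move=> sy H S; apply/card_le1_eqP => _ _ /imsetP[x xS ->] /imsetP[y yS ->].
have cxy : connect (removed_rel e S) x y.
  case: (eqVneq x y) => [->|xy]; first exact: connect0.
  by apply: connect1; move: xS yS; rewrite !inE /removed_rel /= H // => -> ->.
have cyx : connect (removed_rel e S) y x by rewrite (sym_connect_sym (rsym sy S)).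
apply/setP => z; rewrite !inE; case: (z \notin S) => //=.
by apply/idP/idP => Hc; [exact: connect_trans cxy Hc | exact: connect_trans cyx Hc].
Qed.

Section Kn2.
Variables n k : nat.
Hypothesis nk : 2 * k + 1 <= n.
Local Notation V := (kset n k).
Local Notation e := (@kneser n k).

Lemma kn_small : k <= 1 -> forall x y : V, x != y -> e x y.
Proof.
move=> k1 x y xy; rewrite /kneser.
have := kcard x; have := kcard y.
case: k k1 x y xy => [|[|//]] _ x y xy.
  move=> /eqP; rewrite cards_eq0 => /eqP y0 /eqP; rewrite cards_eq0 => /eqP x0.
  by case/eqP: xy; apply: val_inj; rewrite /= x0 y0.
move=> /eqP/cards1P[b Eb] /eqP/cards1P[a Ea].
rewrite Ea Eb -setI_eq0; apply/eqP/setP => i; rewrite !inE.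
apply/negP => /andP[/eqP ia /eqP ib]; case/eqP: xy; apply: val_inj.
by rewrite /= Ea Eb -ia -ib.
Qed.

Lemma kn_vertex : exists x0 : V, true.
Proof.
have : k <= #|[set: 'I_n]| by rewrite cardsT card_ord; lia.
by move=> /ex_ksub[B [_ /eqP Bk]]; exists (mkV Bk).
Qed.

Lemma kn_nb (x : V) : exists D, e x D.
Proof.
have : k <= #|~: val x| by have := cardsC (val x); rewrite card_ord kcard; lia.
move=> /ex_ksub[B [BC /eqP Bk]]; exists (mkV Bk).
by rewrite /kneser /= disjoint_sym disjoints_subset.
Qed.

Lemma kn_nbip : 0 < k -> ~ bipartite e.
Proof.
move=> k0 [f Hf]; have [x0 _] := kn_vertex.
have : forall y, y \in [set y : V | f y == f x0].
  apply: (kclosure nk (x0 := x0)); first by rewrite inE.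
  move=> x z xz; rewrite !inE => /eqP fx.
  have [D [exD ezD]] := common_nb nk xz.
  have := Hf _ _ exD; have := Hf _ _ ezD; rewrite -fx.
  by case: (f z); case: (f x); case: (f D).
have [D eD] := kn_nb x0.
by move=> /(_ D); rewrite inE => /eqP fD; have := Hf _ _ eD; rewrite fD eqxx.
Qed.

Lemma kn_deg (x : V) : 0 < k -> n - k <= #|nbhd e x|.
Proof.
move=> k0.
have -> : #|nbhd e x| = #|[set B : {set 'I_n} | (B \subset ~: val x) && (#|B| == k)]|.
  rewrite -(card_imset _ val_inj); apply: eq_card => B; rewrite !inE.
  apply/imsetP/andP.
    move=> [y]; rewrite inE /kneser => dis ->; split; last exact: (svalP y).
    by rewrite -disjoints_subset disjoint_sym.
  move=> [BC Bk]; exists (mkV Bk) => //; rewrite inE /kneser /=.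
  by rewrite disjoint_sym disjoints_subset.
rewrite cards_draws; have := cardsC (val x); rewrite card_ord kcard => E.
have -> : #|~: val x| = n - k by slia.
apply: bin_ge => //; slia.
Qed.

Lemma kn_noclique (A : {set V}) : 1 < k -> n - k <= #|A| ->
  (forall x y, x \in A -> y \in A -> x != y -> e x y) -> False.
Proof.
move=> k1 dA cl.
have H : \sum_(B in A) #|val B| <= n.
  under eq_bigr => B _ do rewrite -sum_inds.
  rewrite exchange_big /= -[X in _ <= X]card_ord -sum1_card; apply: leq_sum => i _.
  have -> : \sum_(B in A) ((i \in val B) : nat) = #|[set B in A | i \in val B]|.
    rewrite -sum_inds [LHS]big_mkcond /=; apply: eq_bigr => B _; rewrite !inE.
    by case: (B \in A); case: (i \in val B).
  apply/card_le1_eqP => B1 B2; rewrite !inE => /andP[B1A iB1] /andP[B2A iB2].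
  apply/eqP; rewrite eq_sym; apply: contraT => B12; have := cl _ _ B1A B2A B12.
  by rewrite /kneser => dis; have := disjointFr dis iB1; rewrite iB2.
move: H; rewrite (eq_bigr (fun _ => k)); last by move=> B _; rewrite kcard.
rewrite sum_nat_const => H.
have : (n - k) * 2 <= #|A| * k by apply: leq_mul.
slia.
Qed.

End Kn2.

Lemma kn_key n k (nk : 2 * k + 1 <= n) (S : {set kset n k}) :
  vertex_cut (@kneser n k) S -> ncomp (@kneser n k) S < #|S|.
Proof.
move=> vc; rewrite /vertex_cut in vc.
case: (leqP k 1) => k1.
  have := complete_ncomp (@kn_sym n k) (kn_small k1) S; slia.
have k0 : 0 < k by slia.
have [x0 _] := kn_vertex nk.
set d := #|nbhd (@kneser n k) x0|.
have reg : regular (@kneser n k) d.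
  by move=> x; apply/eqP; rewrite eqn_leq !(VT_deg (kn_VT nk)).
have dge : n - k <= d := kn_deg nk x0 k0.
have sy := @kn_sym n k.
have ir := @kn_irr n k k0.
apply: (core sy ir reg).
- exact: kn_nbip nk k0.
- slia.
- move=> X X0 XT; exact: (lam_ge sy ir reg (kn_VT nk) (kn_conn nk) X0 XT).
- apply: (super sy ir reg (kn_VT nk) (kn_conn nk)); first slia.
  by move=> A Ad cl; apply: (kn_noclique nk k1 _ cl); rewrite Ad.
- by [].
Qed.

Import Order.TTheory GRing.Theory Num.Theory.

Theorem lemma2p13 :
  (forall (T : finType) (e : rel T) (l : nat),
     symmetric e -> irreflexive e ->
     regular e l -> ~ bipartite e ->
     edge_connectivity_is e l ->
     (forall F, edge_cut e F -> #|F| = l -> exists v, F = incident_edges e v) ->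
     forall S : {set T}, vertex_cut e S -> ncomp e S < #|S|)
  /\
  (forall n k : nat, 2 * k + 1 <= n -> toughness_gt (@kneser n k) 1%R).
Proof.
split; first by move=> T e l; exact: part1.
move=> n k nk S vc.
have key := kn_key nk vc.
have c0 : (0 < (ncomp (@kneser n k) S)%:R :> rat)%R.
  by rewrite ltr0n; move: vc; rewrite /vertex_cut; slia.
by rewrite ltr_pdivlMr // mul1r ltr_nat.
Qed.
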